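(* Let $p,q$ be integers and let $(u_n)_{n\ge0}$ be the Lucas sequence defined by $u_0=0$, $u_1=1$ and $u_{n+2}=pu_{n+1}+qu_n$ for all $n\ge0$. Then the following are equivalent: (a) for every $k\ge1$ the integers $u_0,\dots,u_{2^k-1}$ are pairwise distinct and $\mathcal{D}_{\mathbf u}(2^k)=2^k$ (i.e. $u_0,\dots,u_{2^k-1}$ are pairwise incongruent modulo $2^k$); (b) $p\equiv 2\pmod 4$ and $q\equiv 3\pmod 4$.
   Context: For a sequence $\mathbf w=(w_n)_{n\ge 0}$ of integers and a positive integer $n$ such that $w_0,\dots,w_{n-1}$ are pairwise distinct, the discriminator $\mathcal{D}_{\mathbf w}(n)$ is the smallest positive integer $m$ such that $w_0,\dots,w_{n-1}$ are pairwise incongruent modulo $m$. *)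

(* Defs.v *)
From HB Require Import structures.
From mathcomp Require Import all_boot all_order all_algebra.
Set Implicit Arguments. Unset Strict Implicit. Unset Printing Implicit Defensive.
Import Order.TTheory GRing.Theory Num.Theory.
Local Open Scope ring_scope.

(* Pairs (u_n, u_{n+1}) of the Lucas sequence u_0 = 0, u_1 = 1,
   u_{n+2} = p u_{n+1} + q u_n. *)
Fixpoint lucas_pair (p q : int) (n : nat) : int * int :=
  match n with
  | O => (0, 1)
  | S n' => let: (a, b) := lucas_pair p q n' in (b, p * b + q * a)
  end.

Definition lucas (p q : int) (n : nat) : int := (lucas_pair p q n).1.

Definition pairwise_distinct (w : nat -> int) (n : nat) : Prop :=
  forall i j : nat, (i < n)%N -> (j < n)%N -> i <> j -> w i <> w j.

Definition pairwise_incongruent (w : nat -> int) (n m : nat) : Prop :=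
  forall i j : nat, (i < n)%N -> (j < n)%N -> i <> j ->
    ~ (w i = w j %[mod m%:Z])%Z.

Definition discriminator_is (w : nat -> int) (n m : nat) : Prop :=
  (0 < m)%N /\ pairwise_incongruent w n m /\
  (forall m' : nat, (0 < m')%N -> (m' < m)%N -> ~ pairwise_incongruent w n m').

(* Main.v *)
Require Import Defs.
From HB Require Import structures.
From mathcomp Require Import all_boot all_order all_algebra.
From mathcomp Require Import zify ring.
Import Order.TTheory GRing.Theory Num.Theory.
Local Open Scope ring_scope.

Lemma lucas0 p q : lucas p q 0%N = 0. Proof. by []. Qed.
Lemma lucas1 p q : lucas p q 1%N = 1. Proof. by []. Qed.
Lemma lucasSS p q n : lucas p q n.+2 = p * lucas p q n.+1 + q * lucas p q n.
Proof. by rewrite /lucas /=; case: (lucas_pair p q n). Qed.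

Lemma pair_ind (P : nat -> Prop) : P 0%N -> P 1%N ->
  (forall n, P n -> P n.+1 -> P n.+2) -> forall n, P n.
Proof.
move=> h0 h1 hS n; suff: P n /\ P n.+1 by case.
elim: n => [|n [IH1 IH2]]; first by split.
by split => //; apply: hS.
Qed.

Lemma lucas_add p q m n : lucas p q (m + n).+1 =
  lucas p q m.+1 * lucas p q n.+1 + q * lucas p q m * lucas p q n.
Proof.
elim/pair_ind: n => [|| n IH1 IH2].
- by rewrite addn0 lucas0 lucas1; ring.
- by rewrite addn1 !lucasSS lucas0 lucas1; ring.
- rewrite !addnS lucasSS IH1 -addnS IH2 (lucasSS p q n) (lucasSS p q n.+1).
  rewrite (lucasSS p q n); ring.
Qed.

Definition G p q (M : nat) := exists a b : int,
  lucas p q M = M%:Z * (2*a+1) /\ lucas p q M.+1 = 1 + M%:Z * (2*b+1).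

Lemma G_double (p q c d : int) (N : nat) : p = 2*(2*c+1) -> q = 4*d+3 ->
  G p q (2*N)%N -> G p q (2*(2*N))%N.
Proof.
move=> hp hq.
case: N => [|m].
  by move=> _; exists 0, 0; rewrite !muln0 lucas0 lucas1 !mul0r addr0.
move=> [a [b [h1 h2]]].
set M := (2 * m.+1)%N in h1 h2 *.
have MP : M%:Z = 2 * (m.+1)%:Z by rewrite /M PoszM.
have hM : M = m.*2.+2 by rewrite /M; lia.
have e1 : lucas p q (2*M).+1 = lucas p q M.+1 ^+ 2 + q * lucas p q M ^+ 2.
  have -> : (2 * M = M + M)%N by lia.
  by rewrite lucas_add; ring.
have e2 : lucas p q (2*M) = lucas p q M * (2 * lucas p q M.+1 - p * lucas p q M).
  have -> : (2*M = (m.*2.+1 + M).+1)%N by rewrite hM; lia.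
  rewrite lucas_add -hM.
  have hq' : q * lucas p q m.*2.+1 = lucas p q M.+1 - p * lucas p q M.
    by rewrite hM lucasSS; ring.
  rewrite hq'; ring.
set N' := (m.+1)%:Z in MP.
exists (a + N' * ((2*b+1) - (2*c+1)*(2*a+1)) * (2*a+1)).
exists (b + 2 * N' * (b^+2+b+(4*d+3)*(a^+2+a)+d+1)).
rewrite PoszM e1 e2 h1 h2 MP hp hq; split; ring.
Qed.

Lemma G_pow (p q c d : int) k : p = 2*(2*c+1) -> q = 4*d+3 -> G p q (2 ^ k)%N.
Proof.
move=> hp hq; case: k => [|k].
  exists 0, (2*c); rewrite expn0 lucasSS lucas1 lucas0 hp; split; lia.
elim: k => [|k IH].
  exists c, ((2*c+1)^+2 + d); rewrite expn1 !lucasSS lucas1 lucas0 hp hq; split; ring.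
have -> : (2 ^ k.+2 = 2 * (2 * 2 ^ k))%N by rewrite !expnS.
by apply: (G_double p q c d (2 ^ k) hp hq); rewrite -expnS.
Qed.

Lemma F_shift (p q c d : int) M : p = 2*(2*c+1) -> q = 4*d+3 -> G p q M ->
  forall n, exists e : int, lucas p q (n + M) - lucas p q n = M%:Z * (2*e+1).
Proof.
move=> hp hq [a [b [h1 h2]]].
elim/pair_ind => [||n [e1 IH1] [e2 IH2]].
- by exists a; rewrite add0n h1 lucas0 subr0.
- by exists b; rewrite add1n h2 lucas1; ring.
- exists ((2*c+1)*(2*e2+1) + (4*d+3)*e1 + 2*d+1).
  have -> : (n.+2 + M = (n + M).+2)%N by rewrite !addSn.
  rewrite !lucasSS.
  have E1 : lucas p q (n + M) = lucas p q n + M%:Z * (2*e1+1) by rewrite -IH1; ring.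
  have E2 : lucas p q (n + M).+1 = lucas p q n.+1 + M%:Z * (2*e2+1)
    by rewrite -addSn -IH2; ring.
  rewrite E1 E2 hp hq; ring.
Qed.

Lemma dvdz_lin (d x y a b : int) : (d %| x)%Z -> (d %| y)%Z -> (d %| a*x + b*y)%Z.
Proof.
move=> /dvdzP [cx ->] /dvdzP [cy ->]; apply/dvdzP; exists (a*cx + b*cy); ring.
Qed.

Lemma dvdz_self (d : int) : (d %| d)%Z.
Proof. by apply/dvdzP; exists 1; rewrite mul1r. Qed.

Lemma no_odd (M e : int) : M != 0 -> ~ (2*M %| M*(2*e+1))%Z.
Proof.
move=> hM /dvdzP [c hc].
have : M * (2*e+1) = M * (2*c) by rewrite hc; ring.
move/(mulfI hM) => h; lia.
Qed.

Lemma incong (p q c d : int) k : p = 2*(2*c+1) -> q = 4*d+3 ->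
  forall i j, (i < 2 ^ k)%N -> (j < 2 ^ k)%N -> i <> j ->
  ~ (((2 ^ k)%N)%:Z %| lucas p q i - lucas p q j)%Z.
Proof.
move=> hp hq; elim: k => [|k IH] i j.
  by rewrite expn0 => hi hj nij; exfalso; apply: nij; lia.
have F := (F_shift p q c d _ hp hq (G_pow p q c d k hp hq)).
set M := (2 ^ k)%N in IH F *.
have MP : ((2 ^ k.+1)%N)%:Z = 2 * M%:Z by rewrite expnS PoszM.
have M0 : M%:Z != 0 by rewrite /M; apply/eqP; move/eqP: (expn_gt0 2 k) => /=; lia.
have M2 : (2 ^ k.+1 = M + M)%N by rewrite expnS /M; lia.
rewrite MP M2.
wlog le_ij : i j / (i <= j)%N.
  move=> W hi hj nij H; case: (leqP i j) => [l|l]; first exact: (W i j).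
  apply: (W j i (ltnW l) hj hi (nesym nij)).
  have -> : lucas p q j - lucas p q i = (-1) * (lucas p q i - lucas p q j) + 0 * 0 by ring.
  by apply: dvdz_lin => //; rewrite dvdz0.
move=> hi hj nij H.
have H1 : (M%:Z %| lucas p q i - lucas p q j)%Z.
  have -> : lucas p q i - lucas p q j = 1 * (lucas p q i - lucas p q j) + 0 * 0 by ring.
  apply: dvdz_lin; last by rewrite dvdz0.
  by apply: (dvdz_trans _ H); apply/dvdzP; exists 2.
case: (ltnP j M) => hjM.
  by apply: (IH i j) => //; apply: (leq_ltn_trans le_ij).
have [j' ej] : exists j', j = (j' + M)%N by exists (j - M)%N; lia.
subst j.
have hj' : (j' < M)%N by lia.
have [e2 E2] := F j'.
have h2 : lucas p q (j' + M) = lucas p q j' + M%:Z * (2 * e2 + 1) by rewrite -E2; ring.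
case: (ltnP i M) => hiM.
  have Hd : (M%:Z %| lucas p q i - lucas p q j')%Z.
    have -> : lucas p q i - lucas p q j' =
      1 * (lucas p q i - lucas p q (j' + M)) + (2*e2+1) * M%:Z by rewrite h2; ring.
    by apply: dvdz_lin => //; apply: dvdz_self.
  case: (eqVneq i j') => [eij|nij'].
    apply: (no_odd _ (-e2-1) M0).
    have -> : M%:Z * (2 * (-e2-1) + 1) = 1 * (lucas p q i - lucas p q (j' + M)) + 0 * 0.
      by rewrite eij h2; ring.
    by apply: dvdz_lin => //; rewrite -MP dvdz0.
  by apply: (IH i j') => //; apply/eqP.
have [i' ei] : exists i', i = (i' + M)%N by exists (i - M)%N; lia.
subst i.
have hi' : (i' < M)%N by lia.
have [e1 E1] := F i'.
have Hd : (2 * M%:Z %| lucas p q i' - lucas p q j')%Z.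
  have -> : lucas p q i' - lucas p q j' =
     1 * (lucas p q (i' + M) - lucas p q (j' + M)) + (e2 - e1) * (2 * M%:Z).
    have h1 : lucas p q (i' + M) = lucas p q i' + M%:Z * (2 * e1 + 1) by rewrite -E1; ring.
    rewrite h1 h2; ring.
  by apply: dvdz_lin => //; apply: dvdz_self.
case: (eqVneq i' j') => [eij|nij'].
  by apply: nij; rewrite eij.
apply: (IH i' j') => //; first exact/eqP.
have -> : lucas p q i' - lucas p q j' = 1 * (lucas p q i' - lucas p q j') + 0 * 0 by ring.
apply: dvdz_lin; last by rewrite dvdz0.
by apply: (dvdz_trans _ Hd); apply/dvdzP; exists 2.
Qed.

Lemma lucas_cong (m p q p' q' : int) : (m %| p - p')%Z -> (m %| q - q')%Z ->
  forall n, (m %| lucas p q n - lucas p' q' n)%Z.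
Proof.
move=> hp hq; elim/pair_ind => [|| n IH1 IH2].
- by rewrite !lucas0 subrr dvdz0.
- by rewrite !lucas1 subrr dvdz0.
- rewrite !lucasSS.
  have -> : p * lucas p q n.+1 + q * lucas p q n - (p' * lucas p' q' n.+1 + q' * lucas p' q' n)
    = 1 * (p * (lucas p q n.+1 - lucas p' q' n.+1) + q * (lucas p q n - lucas p' q' n))
    + 1 * (lucas p' q' n.+1 * (p - p') + lucas p' q' n * (q - q')) by ring.
  by apply: dvdz_lin; apply: dvdz_lin.
Qed.

Definition bad_pair (r s : int) (m : int) (N : nat) :=
  has (fun i => has (fun j => (i != j) && (m %| lucas r s i - lucas r s j)%Z)
    (iota 0 N)) (iota 0 N).
Definition check (r s : nat) :=
  [|| ((r %% 4 == 2) && (s %% 4 == 3))%N, bad_pair r s 4 4 | bad_pair r s 8 6].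
Lemma check_all : all (fun r => all (fun s => check r s) (iota 0 8)) (iota 0 8).
Proof. by vm_compute. Qed.

Lemma absmod (x : int) (m : nat) : (0 < m)%N ->
  (absz (x %% m%:Z)%Z)%:Z = (x %% m%:Z)%Z /\ (absz (x %% m%:Z)%Z < m)%N.
Proof.
move=> m0.
have h1 : (0 <= x %% m%:Z)%Z by apply: modz_ge0; lia.
have h2 : (x %% m%:Z < m%:Z)%Z by apply: ltz_pmod; lia.
split; lia.
Qed.

Lemma dvdz_cast (m x : int) : (m %| x)%Z -> (x = 0 %[mod m])%Z.
Proof. by move=> h; apply/eqP; rewrite eqz_mod_dvd subr0. Qed.

Theorem theorem5 (p q : int) :
  (forall k : nat, (1 <= k)%N ->
     pairwise_distinct (lucas p q) (2 ^ k) /\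
     discriminator_is (lucas p q) (2 ^ k) (2 ^ k))
  <-> ((p %% 4)%Z = 2 /\ (q %% 4)%Z = 3).
Proof.
split.
- move=> H.
  move: (H 2%N isT) => [_ [_ [I4 _]]].
  move: (H 3%N isT) => [_ [_ [I8 _]]].
  have [rP rlt] := absmod p 8 isT.
  have [sP slt] := absmod q 8 isT.
  set r := absz (p %% 8%:Z)%Z in rP rlt.
  set s := absz (q %% 8%:Z)%Z in sP slt.
  have hpr : (8 %| p - r%:Z)%Z.
    by apply/dvdzP; exists (p %/ 8)%Z; rewrite rP {1}(divz_eq p 8); ring.
  have hqs : (8 %| q - s%:Z)%Z.
    by apply/dvdzP; exists (q %/ 8)%Z; rewrite sP {1}(divz_eq q 8); ring.
  have LC := lucas_cong 8 p q r s hpr hqs.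
  have ck : check r s.
    have A1 : all (fun s => check r s) (iota 0 8) by apply: (allP check_all); rewrite mem_iota.
    by apply: (allP A1); rewrite mem_iota.
  move: ck; rewrite /check => /or3P [/andP [/eqP r4 /eqP s4] | B4 | B8].
  + have mod84 : forall x : int, (x %% 4)%Z = ((x %% 8)%Z %% 4)%Z.
      move=> x; rewrite {1}(divz_eq x 8).
      have -> : (x %/ 8)%Z * 8 = ((x %/ 8)%Z * 2) * 4 by ring.
      by rewrite modzMDl.
    by rewrite (mod84 p) (mod84 q) -rP -sP !modz_nat r4 s4.
  + exfalso; have [i hi Bi] := seq.hasP B4.
    have [j hj /andP [/eqP nij hd]] := seq.hasP Bi.
    rewrite mem_iota /= in hi; rewrite mem_iota /= in hj.
    apply: (I4 i j) => //; apply/eqP; rewrite eqz_mod_dvd.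
    have -> : lucas p q i - lucas p q j = 1 * (lucas r s i - lucas r s j)
       + 1 * ((lucas p q i - lucas r s i) - (lucas p q j - lucas r s j)) by ring.
    apply: dvdz_lin => //.
    have -> : (lucas p q i - lucas r s i) - (lucas p q j - lucas r s j) =
       1 * (lucas p q i - lucas r s i) + (-1) * (lucas p q j - lucas r s j) by ring.
    by apply: dvdz_lin; apply: (dvdz_trans _ (LC _)); apply/dvdzP; exists 2.
  + exfalso; have [i hi Bi] := seq.hasP B8.
    have [j hj /andP [/eqP nij hd]] := seq.hasP Bi.
    rewrite mem_iota /= in hi; rewrite mem_iota /= in hj.
    apply: (I8 i j) => //; first by apply: (leq_trans hi).
      by apply: (leq_trans hj).
    apply/eqP; rewrite eqz_mod_dvd.
    have -> : lucas p q i - lucas p q j = 1 * (lucas r s i - lucas r s j)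
       + 1 * ((lucas p q i - lucas r s i) - (lucas p q j - lucas r s j)) by ring.
    apply: dvdz_lin => //.
    have -> : (lucas p q i - lucas r s i) - (lucas p q j - lucas r s j) =
       1 * (lucas p q i - lucas r s i) + (-1) * (lucas p q j - lucas r s j) by ring.
    by apply: dvdz_lin.
- move=> [hp4 hq4] k k1.
  have hp : p = 2 * (2 * (p %/ 4)%Z + 1) by rewrite {1}(divz_eq p 4) hp4; ring.
  have hq : q = 4 * (q %/ 4)%Z + 3 by rewrite {1}(divz_eq q 4) hq4; ring.
  have INC := incong p q _ _ k hp hq.
  split.
    move=> i j hi hj nij e; apply: (INC i j hi hj nij).
    by rewrite e subrr dvdz0.
  split; first by rewrite expn_gt0.
  split.
    move=> i j hi hj nij /eqP; rewrite eqz_mod_dvd; exact: INC.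
  move=> [//|m] _ mlt Hinc.
  pose f (i : 'I_(2 ^ k)) : 'I_m.+1 := inord (absz (lucas p q i %% m.+1%:Z)%Z).
  have finj : injective f.
    move=> i j /(congr1 val); rewrite /f /=.
    have [a1 a2] := absmod (lucas p q i) m.+1 (ltn0Sn m).
    have [b1 b2] := absmod (lucas p q j) m.+1 (ltn0Sn m).
    rewrite !inordK // => e.
    apply: val_inj => /=; case: (boolP (val i == val j)) => [/eqP //| /eqP nij].
    exfalso; apply: (Hinc i j (ltn_ord i) (ltn_ord j) nij).
    by rewrite -a1 -b1 e.
  have := leq_card f finj; rewrite !card_ord; lia.
Qed.
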